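(* Let $(X,\pi)$ be a finite symmetric two-player zero-sum game, i.e. $\pi(x,y)=-\pi(y,x)$ for all $x,y\in X$. Imitation is subject to a money pump in $(X,\pi)$ if and only if $(X,\pi)$ is a generalized rock-paper-scissors game.
   Context: $\pi(x,y)$ is the payoff of the player choosing $x$ against $y$. Relative payoff: $\Delta(x,y)=\pi(x,y)-\pi(y,x)$. Imitate-the-best: given initial $y_0\in X$ and any opponent sequence $(x_t)_{t\ge0}$, $y_t=x_{t-1}$ if $\Delta(x_{t-1},y_{t-1})>0$ and $y_t=y_{t-1}$ otherwise. Imitation is not subject to a money pump if there is $M\in\mathbb{R}_+$ such that for every $y_0\in X$ and every sequence $(x_t)$, $\limsup_{T\to\infty}\sum_{t=0}^T\Delta(x_t,y_t)\le M$; otherwise it is subject to a money pump. A symmetric zero-sum game $(Y,\pi)$ is a generalized rock-paper-scissors matrix if for every $y\in Y$ there is $x\in Y$ with $\pi(x,y)>0$; $(X,\pi)$ is a generalized rock-paper-scissors game if some nonempty $\bar X\subseteq X$ makes $(\bar X,\pi|_{\bar X\times\bar X})$ a generalized rock-paper-scissors matrix. *)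

(* Defs.v *)
From HB Require Import structures.
From mathcomp Require Import all_boot all_order all_algebra.
From mathcomp Require Import all_classical all_reals all_analysis.
Set Implicit Arguments. Unset Strict Implicit. Unset Printing Implicit Defensive.
Import Order.TTheory GRing.Theory Num.Theory.
Local Open Scope ring_scope.

Section Game.
Variables (R : realType) (X : finType) (pi : X -> X -> R).

Definition rel_payoff (x y : X) : R := pi x y - pi y x.

Fixpoint imitate (y0 : X) (xs : nat -> X) (t : nat) : X :=
  match t with
  | 0 => y0
  | t'.+1 => let y := imitate y0 xs t' in
             if 0 < rel_payoff (xs t') y then xs t' else y
  end.

Definition cum_rel_payoff (y0 : X) (xs : nat -> X) (T : nat) : R :=
  \sum_(0 <= t < T.+1) rel_payoff (xs t) (imitate y0 xs t).

Definition no_money_pump : Prop :=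
  exists M : R, 0 <= M /\
    forall (y0 : X) (xs : nat -> X),
      (limn_esup (fun T => (cum_rel_payoff y0 xs T)%:E) <= M%:E)%E.

Definition money_pump : Prop := ~ no_money_pump.

Definition grps_matrix (Xbar : {set X}) : Prop :=
  forall y, y \in Xbar -> exists2 x, x \in Xbar & 0 < pi x y.

Definition grps_game : Prop :=
  exists Xbar : {set X}, Xbar != finset.set0 /\ grps_matrix Xbar.

End Game.

(* Main.v *)
Require Import Defs.
From HB Require Import structures.
From mathcomp Require Import all_boot all_order all_algebra.
From mathcomp Require Import all_classical all_reals all_analysis.
From mathcomp Require Import lra.
Import Order.TTheory GRing.Theory Num.Theory.
Local Open Scope ring_scope.

Section Aux.
Variable R : realType.

Lemma esup_ub (u : nat -> R) (M : R) : (forall n, u n <= M) ->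
  (limn_esup (fun n => (u n)%:E) <= M%:E)%E.
Proof.
move=> H; rewrite limn_esup_lim; apply: lime_le; first exact: is_cvg_esups.
apply: nearW => n /=; apply: ge_ereal_sup => _ [k _ <-]; by rewrite lee_fin.
Qed.

Lemma esup_lb (u : nat -> R) (c M : R) : 0 < c ->
  (forall n, (n.+1)%:R * c <= u n) ->
  ~ (limn_esup (fun n => (u n)%:E) <= M%:E)%E.
Proof.
move=> c0 H; rewrite limn_esup_lim => Hle.
set K := Num.truncn (M / c).
have HK : M < (K.+1)%:R * c.
  by rewrite -ltr_pdivrMr // truncnS_gt.
have : (M%:E < limn (esups (fun n => (u n)%:E)))%E.
  apply: (@lt_le_trans _ _ ((K.+1)%:R * c)%:E); first by rewrite lte_fin.
  apply: lime_ge; first exact: is_cvg_esups.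
  apply: nearW => n /=; apply: le_ereal_sup_tmp; exists ((u (n + K)%N)%:E).
    by exists (n + K)%N => //=; rewrite leq_addr.
  rewrite lee_fin; apply: le_trans (H _).
  by rewrite ler_pM2r // ler_nat ltnS leq_addl.
by rewrite ltNge Hle.
Qed.
End Aux.

Section Main.
Variables (R : realType) (X : finType) (pi : X -> X -> R).
Hypothesis zero_sum : forall x y, pi x y = - pi y x.

Lemma relE x y : rel_payoff pi x y = pi x y + pi x y.
Proof. by rewrite /rel_payoff (zero_sum y x) opprK. Qed.

Lemma rel_pos x y : 0 < rel_payoff pi x y -> 0 < pi x y.
Proof. rewrite relE => h; lra. Qed.

Lemma grps_pump : grps_game pi -> money_pump pi.
Proof.
move=> [Xb [Xn0 HX]] [M [M0 HM]].
have [y0 y0X] : exists y0, y0 \in Xb.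
  by case/set0Pn: Xn0 => y Hy; exists y.
pose f y := odflt y [pick x in Xb | 0 < pi x y].
have Hf y : y \in Xb -> f y \in Xb /\ 0 < pi (f y) y.
  move=> yX; rewrite /f; case: pickP => [x /andP[-> ->] //|].
  by case: (HX y yX) => x xX px /(_ x); rewrite xX px.
pose xs t := f (iter t f y0).
have Himit t : imitate pi y0 xs t = iter t f y0 /\ iter t f y0 \in Xb.
  elim: t => [|t [IH1 IH2]] //=.
  rewrite IH1 /xs; have [h1 h2] := Hf _ IH2.
  by rewrite relE ifT //; lra.
pose c := \big[Order.min/1]_(y in Xb) rel_payoff pi (f y) y.
have c0 : 0 < c.
  apply/bigmin_gtP; split => // y yX; have [_ h] := Hf y yX; rewrite relE; lra.
apply: (@esup_lb R (cum_rel_payoff pi y0 xs) c M c0 _ (HM y0 xs)) => n.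
rewrite /cum_rel_payoff.
apply: le_trans (_ : \sum_(0 <= t < n.+1) c <= _).
  by rewrite sumr_const_nat subn0 mulr_natl.
apply: ler_sum => t _; have [-> h] := Himit t.
exact: bigmin_le_cond.
Qed.

Lemma rank_exists : ~ grps_game pi -> forall n (Y : {set X}), #|Y| = n ->
  exists r : X -> nat, (forall y, (r y <= n)%N) /\
    forall x y, x \in Y -> y \in Y -> 0 < pi x y -> (r x < r y)%N.
Proof.
move=> Hng; elim=> [|n IH] Y HY.
  exists (fun _ => 0%N); split=> // x y xY.
  by move: HY => /eqP; rewrite cards_eq0 => /eqP HY; rewrite HY inE in xY.
have [ys /andP[ysY ysU]] : exists ys, (ys \in Y) && [forall x in Y, ~~ (0 < pi x ys)].
  case: (boolP [exists ys, (ys \in Y) && [forall x in Y, ~~ (0 < pi x ys)]]) => [/existsP //|Hne].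
  exfalso; apply: Hng; exists Y; split.
    by rewrite -card_gt0 HY.
  move=> y yY; move: Hne; rewrite negb_exists => /forallP /(_ y).
  rewrite yY /= negb_forall => /existsP [x]; rewrite negb_imply negbK.
  by case/andP => xY px; exists x.
have HY' : #|Y :\ ys| = n by move: (cardsD1 ys Y); rewrite ysY HY add1n => -[].
have [r [rb rlt]] := IH _ HY'.
exists (fun y => if y == ys then 0%N else (r y).+1); split.
  by move=> y; case: eqP => // _; rewrite ltnS.
move=> x y xY yY pxy.
case: eqP => [Hx|Hx]; case: eqP => [Hy|Hy] //.
- by subst y; move/forallP: ysU => /(_ x); rewrite xY pxy.
- by subst y; move/forallP: ysU => /(_ x); rewrite xY pxy.
- by rewrite ltnS; apply: rlt => //; rewrite !inE; apply/andP; split => //; apply/eqP.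
Qed.

Lemma nogrps_nopump : ~ grps_game pi -> no_money_pump pi.
Proof.
move=> Hng.
have [r [rb rlt]] := @rank_exists Hng _ [set: X] (erefl #|[set: X]|).
pose B := \big[Order.max/0]_x \big[Order.max/0]_y rel_payoff pi x y.
have B0 : 0 <= B by apply: bigmax_ge_id.
have HB x y : rel_payoff pi x y <= B.
  apply: le_trans (le_bigmax _ _ x); exact: (le_bigmax _ (fun y => rel_payoff pi x y) y).
exists (B * #|X|%:R); split; first by rewrite mulr_ge0.
move=> y0 xs; apply: esup_ub => T.
pose yt t := imitate pi y0 xs t.
have step t : rel_payoff pi (xs t) (yt t) <=
    B * (r (yt t))%:R - B * (r (yt t.+1))%:R.
  rewrite /yt /=; case: ifP => h.
    have hl : (r (xs t) < r (imitate pi y0 xs t))%N.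
      by apply: rlt; rewrite ?inE //; apply: rel_pos.
    have : (r (xs t))%:R + 1 <= (r (imitate pi y0 xs t))%:R :> R.
      by rewrite natr1 ler_nat.
    have := HB (xs t) (imitate pi y0 xs t); nra.
  by rewrite subrr leNgt h.
have tel : cum_rel_payoff pi y0 xs T <= B * (r y0)%:R - B * (r (yt T.+1))%:R.
  elim: T => [|T IH].
    by rewrite /cum_rel_payoff big_nat1; exact: (step 0%N).
  rewrite /cum_rel_payoff big_nat_recr //= -/(cum_rel_payoff pi y0 xs T).
  have := step T.+1; rewrite -/(yt T.+1) in IH *; lra.
apply: le_trans tel _.
have : (r (yt T.+1))%:R >= 0 :> R by [].
have : (r y0)%:R <= #|X|%:R :> R by rewrite ler_nat -cardsT.
nra.
Qed.

End Main.

Theorem corollary2 (R : realType) (X : finType) (pi : X -> X -> R)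
  (zero_sum : forall x y, pi x y = - pi y x) :
  money_pump pi <-> grps_game pi.
Proof.
split.
  move=> Hp; apply/not_notP => Hng; apply: Hp; exact: nogrps_nopump.
exact: grps_pump.
Qed.
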